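(* Let $f:[0,\infty)\to[0,\infty)$ be continuously differentiable with $f>0$ on $[t_0,\infty)$ for some $t_0\ge0$ and $f\in C^2([t_0,\infty))$, let $g=\log f$ on $[t_0,\infty)$, assume condition (H1) of the context with the pair $(q,p)$, and set $F(t)=\int_0^t f(s)\,ds$. Then $$\limsup_{t\to\infty}\left(\frac{F(t)\log F(t)}{f(t)}\right)'\le\frac1p,$$ where $1/\infty=0$.
   Context: Condition (H1): (i) $g'(t)>0$ and $g''(t)>0$ for all $t\ge t_0$, and there is a pair $(q,p)$ with either $q=1$ and $p\in(0,\infty]$, or $q\in(1,\infty)$ and $p\in(0,\infty)$, such that $\lim_{t\to\infty}\frac{g'(t)^2}{g(t)g''(t)}=q$ and $\lim_{t\to\infty}\frac{tg'(t)}{g(t)}=p$; (ii) if $q=1$, then $tg'(t)/g(t)$ is nondecreasing on $[t_0,\infty)$ and there exist $k\in\mathbb{N}$ and $\hat g\in C^2([t_0,\infty))$ with $f=\exp_k\circ\hat g$ and $\hat g'/\hat g$ nonincreasing on $[t_0,\infty)$ ($\exp_1=\exp$, $\exp_k=\exp_{k-1}\circ\exp$). *)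

(* Defs.v *)
From Stdlib Require Import Reals.
From Coquelicot Require Import Coquelicot.
Open Scope R_scope.

Definition deriv_within (D : R -> Prop) (u u' : R -> R) (x : R) : Prop :=
  forall eps, 0 < eps -> exists delta, 0 < delta /\
    forall y, D y -> Rabs (y - x) < delta ->
      Rabs (u y - u x - u' x * (y - x)) <= eps * Rabs (y - x).

Definition cont_within (D : R -> Prop) (u : R -> R) (x : R) : Prop :=
  forall eps, 0 < eps -> exists delta, 0 < delta /\
    forall y, D y -> Rabs (y - x) < delta -> Rabs (u y - u x) < eps.

Definition exp_iter (k : nat) (x : R) : R := Nat.iter k exp x.

(* 1/p with the convention 1/oo = 0 (only used for p in (0, +oo]). *)
Definition recip_ext (p : Rbar) : R :=
  match p with Finite r => / r | _ => 0 end.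

(* Main.v *)
Require Import Defs.
From Stdlib Require Import Reals Lra Psatz.
From Coquelicot Require Import Coquelicot.
Open Scope R_scope.

Lemma D_mult f g x df dg : is_derive f x df -> is_derive g x dg ->
  is_derive (fun t => f t * g t) x (df * g x + f x * dg).
Proof. intros H1 H2. apply (is_derive_mult f g x df dg H1 H2). intros; apply Rmult_comm. Qed.

Lemma D_plus f g x df dg : is_derive f x df -> is_derive g x dg ->
  is_derive (fun t => f t + g t) x (df + dg).
Proof. intros H1 H2. apply (is_derive_plus f g x df dg H1 H2). Qed.

Lemma D_minus f g x df dg : is_derive f x df -> is_derive g x dg ->
  is_derive (fun t => f t - g t) x (df - dg).
Proof. intros H1 H2. apply (is_derive_minus f g x df dg H1 H2). Qed.

Lemma D_ln f x df : is_derive f x df -> 0 < f x ->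
  is_derive (fun t => ln (f t)) x (df / f x).
Proof. intros H1 H2. 
  assert (H := is_derive_comp ln f x (/ f x) df (is_derive_ln _ H2) H1).
  simpl in H. unfold scal in H; simpl in H; unfold mult in H; simpl in H.
  replace (df / f x) with (df * / f x) by (unfold Rdiv; ring). exact H. Qed.

Lemma D_id x : is_derive (fun t => t) x 1.
Proof. apply is_derive_Reals. apply derivable_pt_lim_id. Qed.

Lemma D_const (c : R) x : is_derive (fun _ => c) x 0.
Proof. apply is_derive_Reals. apply derivable_pt_lim_const. Qed.

Lemma D_eq (f : R -> R) (x l l' : R) : is_derive f x l -> l = l' -> is_derive f x l'.
Proof. intros H ->; exact H. Qed.

Lemma mono (phi dphi : R -> R) a :
  (forall x, a <= x -> is_derive phi x (dphi x)) ->
  (forall x, a <= x -> 0 <= dphi x) ->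
  forall x y, a <= x -> x <= y -> phi x <= phi y.
Proof.
  intros Hd Hp x y Hx Hxy.
  destruct (Req_dec x y) as [->|Hne]; [lra|].
  destruct (MVT_cor2 phi dphi x y) as [c [Hc1 Hc2]]; [lra| |].
  - intros c Hc. apply is_derive_Reals. apply Hd. lra.
  - assert (0 <= dphi c) by (apply Hp; lra). nra.
Qed.

Lemma deriv_within_is_derive a u u' x :
  a < x -> deriv_within (fun s => a <= s) u u' x -> is_derive u x (u' x).
Proof.
  intros Hax Hd. apply is_derive_Reals. intros eps Heps.
  destruct (Hd (eps/2)) as [d [Hd0 Hd1]]; [lra|].
  assert (Hm : 0 < Rmin d (x - a)) by (apply Rmin_glb_lt; lra).
  exists (mkposreal _ Hm). intros hh Hh0 Hh. simpl in Hh.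
  assert (Hh1 : Rabs hh < d) by (eapply Rlt_le_trans; [exact Hh| apply Rmin_l]).
  assert (Hh2 : Rabs hh < x - a) by (eapply Rlt_le_trans; [exact Hh| apply Rmin_r]).
  assert (Hy : a <= x + hh) by (apply Rabs_def2 in Hh2; lra).
  specialize (Hd1 (x + hh) Hy). replace (x + hh - x) with hh in Hd1 by ring.
  specialize (Hd1 Hh1).
  assert (Hpos : 0 < Rabs hh) by (apply Rabs_pos_lt; exact Hh0).
  replace ((u (x + hh) - u x) / hh - u' x) with ((u (x + hh) - u x - u' x * hh) / hh)
    by (field; exact Hh0).
  unfold Rdiv. rewrite Rabs_mult, Rabs_inv.
  apply (Rmult_lt_reg_r (Rabs hh)); [exact Hpos|].
  rewrite Rmult_assoc, Rinv_l by lra. nra.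
Qed.

Lemma Rmax_contr x y : Rabs (Rmax 0 y - Rmax 0 x) <= Rabs (y - x).
Proof. unfold Rmax; repeat destruct Rle_dec; unfold Rabs; repeat destruct Rcase_abs; lra. Qed.

Lemma F_deriv (f f1 : R -> R) :
  (forall t, 0 <= t -> deriv_within (fun s => 0 <= s) f f1 t) ->
  forall t, 0 < t -> is_derive (fun t => RInt f 0 t) t (f t).
Proof.
  intros Hd t Ht.
  set (ft := fun x => f (Rmax 0 x)).
  assert (Hc : forall x, continuous ft x).
  { intro x. apply continuity_pt_filterlim.
    unfold continuity_pt, continue_in, limit1_in, limit_in. intros eps Heps.
    set (x' := Rmax 0 x).
    assert (Hx' : 0 <= x') by apply Rmax_l.
    destruct (Hd x' Hx' 1 Rlt_0_1) as [d [Hd0 Hd1]].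
    set (K := Rabs (f1 x') + 1).
    assert (HK : 0 < K) by (unfold K; pose proof (Rabs_pos (f1 x')); lra).
    assert (Hm : 0 < Rmin d (eps / K)) by (apply Rmin_glb_lt; [lra| apply Rdiv_lt_0_compat; lra]).
    exists (Rmin d (eps / K)). split; [exact Hm|].
    intros y [_ Hy]. unfold R_dist in *. simpl in Hy. unfold R_dist in Hy.
    unfold ft. fold x'. set (y' := Rmax 0 y).
    assert (Hyy : Rabs (y' - x') <= Rabs (y - x)) by apply Rmax_contr.
    assert (Hy1 : Rabs (y - x) < d) by (eapply Rlt_le_trans; [exact Hy| apply Rmin_l]).
    assert (Hy2 : Rabs (y - x) < eps / K) by (eapply Rlt_le_trans; [exact Hy| apply Rmin_r]).
    assert (Hy0 : 0 <= y') by apply Rmax_l.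
    specialize (Hd1 y' Hy0 ltac:(lra)).
    assert (Htri : Rabs (f y' - f x') <= K * Rabs (y' - x')).
    { unfold K. replace (f y' - f x') with ((f y' - f x' - f1 x' * (y' - x')) + f1 x' * (y' - x')) by ring.
      eapply Rle_trans; [apply Rabs_triang|]. rewrite Rabs_mult. lra. }
    assert (K * Rabs (y - x) < eps).
    { apply (Rmult_lt_compat_l K) in Hy2; [|exact HK].
      replace (K * (eps / K)) with eps in Hy2 by (field; lra). exact Hy2. }
    assert (K * Rabs (y' - x') <= K * Rabs (y - x)) by (apply Rmult_le_compat_l; lra).
    simpl; unfold R_dist; lra. }
  assert (Hder : is_derive (RInt ft 0) t (ft t)).
  { apply (is_derive_RInt ft (RInt ft 0) 0 t); [| apply Hc].
    apply filter_forall. intro b. apply (RInt_correct (V:=R_CompleteNormedModule)). apply (ex_RInt_continuous (V:=R_CompleteNormedModule)).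
    intros; apply Hc. }
  assert (Hft : ft t = f t) by (unfold ft; rewrite Rmax_right; lra).
  rewrite <- Hft.
  apply (is_derive_ext_loc (RInt ft 0)); [|exact Hder].
  exists (mkposreal t Ht). intros y Hy.
  unfold ball in Hy; simpl in Hy; unfold AbsRing_ball, abs, minus, plus, opp in Hy; simpl in Hy.
  assert (Hy0 : 0 < y) by (apply Rabs_def2 in Hy; lra).
  apply RInt_ext. intros z Hz. rewrite Rmin_left in Hz by lra.
  unfold ft. rewrite Rmax_right; lra.
Qed.

Lemma lim_ev (f : R -> R) l : is_lim f p_infty (Finite l) ->
  forall e, 0 < e -> exists T, forall x, T < x -> Rabs (f x - l) < e.
Proof.
  intros H e He. apply is_lim_spec in H. destruct (H (mkposreal e He)) as [M HM].
  exists M. exact HM.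
Qed.

Lemma stepH (G g1 g2 : R -> R) (a q r : R) :
  0 < a -> 1 < q -> 0 < r ->
  (forall x, a <= x -> is_derive G x (g1 x)) ->
  (forall x, a <= x -> is_derive g1 x (g2 x)) ->
  (forall x, a <= x -> 0 < G x /\ 0 < g1 x /\ 0 < g2 x) ->
  is_lim (fun t => g1 t ^ 2 / (G t * g2 t)) p_infty q ->
  is_lim (fun t => t * g1 t / G t) p_infty r ->
  1 - 1/q <= 1/r.
Proof.
  intros Ha Hq Hr HG Hg1 Hpos Hlq Hlr.
  destruct (Rle_or_lt (1 - 1/q) (1/r)) as [ok|Hc]; [exact ok|exfalso].
  set (s := 1 - 1/q) in *.
  assert (Hq1 : 0 < 1/q < 1).
  { split; [apply Rdiv_lt_0_compat; lra|]. apply (Rmult_lt_reg_r q); [lra|].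
    field_simplify; lra. }
  assert (Hs : 0 < s < 1) by (unfold s; lra).
  assert (Hrs : 1 < r * s).
  { apply (Rmult_lt_compat_l r) in Hc; [|lra].
    replace (r * (1/r)) with 1 in Hc by (field; repeat split; nra). lra. }
  set (mu := Rmin (Rmin (r/2) (s/2)) (Rmin ((r*s-1)/(2*(r+s))) 1)).
  assert (Hmu1 : mu <= r/2) by (unfold mu; eapply Rle_trans; [apply Rmin_l|apply Rmin_l]).
  assert (Hmu2 : mu <= s/2) by (unfold mu; eapply Rle_trans; [apply Rmin_l|apply Rmin_r]).
  assert (Hmu3 : mu <= (r*s-1)/(2*(r+s))) by (unfold mu; eapply Rle_trans; [apply Rmin_r|apply Rmin_l]).
  assert (Hmu4 : mu <= 1) by (unfold mu; eapply Rle_trans; [apply Rmin_r|apply Rmin_r]).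
  assert (Hmu0 : 0 < mu).
  { unfold mu. apply Rmin_glb_lt; apply Rmin_glb_lt; try lra.
    apply Rdiv_lt_0_compat; lra. }
  assert (Hmu3' : mu * (r + s) <= (r*s-1)/2).
  { apply (Rmult_le_compat_r (r+s)) in Hmu3; [|lra].
    replace ((r * s - 1) / (2 * (r + s)) * (r + s)) with ((r*s-1)/2) in Hmu3 by (field; repeat split; nra).
    lra. }
  set (dR := q - 1/(1/q + mu)).
  assert (HdR : 0 < dR).
  { unfold dR. assert (1/(1/q+mu) < q); [|lra].
    apply (Rmult_lt_reg_r (1/q + mu)); [lra|].
    replace (1 / (1 / q + mu) * (1 / q + mu)) with 1 by (field; repeat split; nra).
    replace (q * (1/q + mu)) with (1 + q * mu) by (field; repeat split; nra). nra. }
  destruct (lim_ev _ _ Hlr mu Hmu0) as [T1 HT1].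
  destruct (lim_ev _ _ Hlq dR HdR) as [T2 HT2].
  set (T := Rmax a (Rmax T1 T2) + 1).
  assert (HTa : a < T /\ T1 < T /\ T2 < T).
  { unfold T. pose proof (Rmax_l a (Rmax T1 T2)). pose proof (Rmax_r a (Rmax T1 T2)).
    pose proof (Rmax_l T1 T2). pose proof (Rmax_r T1 T2). lra. }
  set (c := (r - mu) * (r * s - 1) / 2).
  assert (Hc0 : 0 < c) by (unfold c; apply Rdiv_lt_0_compat; [apply Rmult_lt_0_compat|]; lra).
  set (rho := fun t => t * g1 t / G t).
  set (drho := fun x => ((1 * g1 x + x * g2 x) * G x - x * g1 x * g1 x) / G x ^ 2).
  assert (Hdrho : forall x, a <= x -> is_derive rho x (drho x)).
  { intros x Hx. destruct (Hpos x Hx) as [H1 [H2 H3]]. unfold rho, drho.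
    apply (is_derive_div (fun t => t * g1 t) G x); [| apply HG; exact Hx| lra].
    apply D_mult; [apply D_id| apply Hg1; exact Hx]. }
  assert (Hbound : forall x, T <= x -> x * drho x <= - c).
  { intros x Hx. assert (Hxa : a <= x) by lra. destruct (Hpos x Hxa) as [H1 [H2 H3]].
    specialize (HT1 x ltac:(lra)). specialize (HT2 x ltac:(lra)).
    apply Rabs_def2 in HT1. apply Rabs_def2 in HT2. destruct HT1 as [HT1a HT1b]. destruct HT2 as [HT2a HT2b].
    set (rx := x * g1 x / G x) in *.
    set (X := G x * g2 x / g1 x ^ 2).
    assert (HX0 : 0 < X) by (unfold X; apply Rdiv_lt_0_compat; [nra| apply pow_lt; lra]).
    assert (HXr : X = 1 / (g1 x ^ 2 / (G x * g2 x))) by (unfold X; field; lra).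
    assert (HXb : X <= 1/q + mu).
    { rewrite HXr. set (Rq := g1 x ^ 2 / (G x * g2 x)) in *.
      assert (HRq : 1 / (1/q + mu) < Rq) by (unfold dR in *; lra).
      assert (0 < 1 / (1/q + mu)) by (apply Rdiv_lt_0_compat; lra).
      assert (HRq0 : 0 < Rq) by lra.
      apply (Rmult_le_reg_r Rq); [exact HRq0|].
      replace (1 / Rq * Rq) with 1 by (field; lra).
      apply (Rmult_lt_compat_l (1/q + mu)) in HRq; [|lra].
      replace ((1 / q + mu) * (1 / (1 / q + mu))) with 1 in HRq by (field; repeat split; nra).
      lra. }
    assert (Hid : x * drho x = rx * (1 + rx * (X - 1))).
    { unfold drho, rx, X. field. lra. }
    rewrite Hid.
    assert (Hrx : r - mu < rx) by lra.
    assert (HX1 : X - 1 <= - (s - mu)) by (unfold s in *; lra).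
    assert (Hprod : rx * (X - 1) <= - ((r - mu) * (s - mu))).
    { assert (rx * (X-1) <= rx * (- (s - mu))) by (apply Rmult_le_compat_l; lra).
      assert (rx * (s - mu) >= (r - mu) * (s - mu)) by (apply Rmult_ge_compat_r; lra).
      lra. }
    assert (Hpr : (r - mu) * (s - mu) >= r * s - (r * s - 1) / 2) by nra.
    assert (Hin : 1 + rx * (X - 1) <= - ((r*s-1)/2)) by lra.
    assert (rx * (1 + rx * (X - 1)) <= rx * (- ((r*s-1)/2))) by (apply Rmult_le_compat_l; lra).
    assert (rx * ((r*s-1)/2) >= (r - mu) * ((r*s-1)/2)) by (apply Rmult_ge_compat_r; lra).
    unfold c. lra. }
  set (phi := fun t => - (rho t + c * ln t)).
  assert (Hphi : forall x y, T <= x -> x <= y -> phi x <= phi y).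
  { apply (mono phi (fun x => - (drho x + c * / x))).
    - intros x Hx. unfold phi. apply (is_derive_opp (fun t => rho t + c * ln t)).
      apply D_plus; [apply Hdrho; lra|]. apply is_derive_scal. apply is_derive_ln. lra.
    - intros x Hx. specialize (Hbound x Hx).
      assert (drho x <= - c / x).
      { apply (Rmult_le_reg_l x); [lra|]. replace (x * (- c / x)) with (-c) by (field; repeat split; nra). lra. }
      unfold Rdiv in *. lra. }
  set (k := Rmax 0 ((rho T - r + 1) / c) + 1).
  assert (Hk : (rho T - r + 1) / c <= k - 1 /\ 0 < k).
  { unfold k. pose proof (Rmax_l 0 ((rho T - r + 1) / c)). pose proof (Rmax_r 0 ((rho T - r + 1) / c)). lra. }
  set (ts := T * exp k).
  assert (Hek : 1 + k <= exp k) by apply exp_ineq1_le.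
  assert (Hts : T <= ts) by (unfold ts; nra).
  specialize (Hphi T ts (Rle_refl _) Hts). unfold phi in Hphi.
  assert (Hln : ln ts = ln T + k) by (unfold ts; rewrite ln_mult; [rewrite ln_exp; ring| lra| apply exp_pos]).
  rewrite Hln in Hphi.
  assert (Hck : rho T - r + 1 <= c * (k - 1)).
  { destruct Hk as [Hk _]. apply (Rmult_le_compat_l c) in Hk; [|lra].
    replace (c * ((rho T - r + 1) / c)) with (rho T - r + 1) in Hk by (field; repeat split; nra). exact Hk. }
  specialize (HT1 ts ltac:(lra)). apply Rabs_def2 in HT1. fold rho in HT1.
  unfold rho in *. lra.
Qed.

Lemma exp_pow4 y : 0 <= y -> y ^ 4 / 256 <= exp y.
Proof.
  intro Hy. assert (He : exp y = exp (y/4) ^ 4).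
  { rewrite <- (exp_ln (exp (y/4))) by apply exp_pos. rewrite ln_exp.
    simpl. rewrite Rmult_1_r, <- !exp_plus. f_equal. field. }
  rewrite He. assert (H1 : y / 4 <= exp (y/4)) by (pose proof (exp_ineq1_le (y/4)); lra).
  assert (H2 : (y/4)^4 <= exp (y/4) ^ 4) by (apply pow_incr; lra).
  replace (y^4/256) with ((y/4)^4) by field. exact H2.
Qed.

Lemma core (f f1 g1 g2 F : R -> R) (a q : R) :
  0 < a -> 1 <= q ->
  (forall x, a <= x -> is_derive f x (f1 x)) ->
  (forall x, a <= x -> is_derive g1 x (g2 x)) ->
  (forall x, a <= x -> is_derive F x (f x)) ->
  (forall x, a <= x -> 0 < f x /\ 0 < g1 x /\ 0 < g2 x) ->
  (forall x, a <= x -> f1 x = f x * g1 x) ->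
  is_lim (fun t => g1 t ^ 2 / (ln (f t) * g2 t)) p_infty q ->
  forall eta, 0 < eta -> eta <= 1/(4*q) ->
  exists T, a <= T /\ forall t, T <= t -> exists d,
    is_derive (fun t => F t * ln (F t) / f t) t d /\ d <= 1 - 1/q + 3*eta.
Proof.
  intros Ha Hq Hf Hg1 HF Hpos Hf1 Hlim eta Heta Heta4.
  set (G := fun s => ln (f s)).
  assert (HG : forall x, a <= x -> is_derive G x (g1 x)).
  { intros x Hx. destruct (Hpos x Hx) as [H1 _]. unfold G.
    apply (D_eq _ _ (f1 x / f x)); [apply D_ln; auto|]. rewrite Hf1 by auto. field. lra. }
  assert (Hg1m : forall x y, a <= x -> x <= y -> g1 x <= g1 y).
  { apply (mono g1 g2 a Hg1). intros x Hx; destruct (Hpos x Hx) as [_ [_ H]]; lra. }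
  assert (HA : forall x, a <= x -> G a + g1 a * (x - a) <= G x).
  { intros x Hx.
    assert (H := mono (fun x => G x - g1 a * x) (fun x => g1 x - g1 a * 1) a).
    assert (H' : G a - g1 a * a <= G x - g1 a * x); [|lra].
    apply H; [| |lra|exact Hx].
    - intros y Hy. apply D_minus; [apply HG; auto|]. apply is_derive_scal. apply D_id.
    - intros y Hy. specialize (Hg1m a y (Rle_refl _) Hy). lra. }
  assert (HGbig : forall B, exists T, a <= T /\ forall x, T <= x -> B <= G x).
  { intros B. destruct (Hpos a (Rle_refl _)) as [_ [Hg1a _]].
    exists (a + Rabs (B - G a) / g1 a). split.
    - assert (0 <= Rabs (B - G a) / g1 a) by (apply Rdiv_le_0_compat; [apply Rabs_pos|lra]). lra.
    - intros x Hx. assert (Hxa : a <= x).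
      { assert (0 <= Rabs (B - G a) / g1 a) by (apply Rdiv_le_0_compat; [apply Rabs_pos|lra]). lra. }
      specialize (HA x Hxa).
      assert (g1 a * (Rabs (B - G a) / g1 a) <= g1 a * (x - a)) by (apply Rmult_le_compat_l; lra).
      replace (g1 a * (Rabs (B - G a) / g1 a)) with (Rabs (B - G a)) in H by (field; lra).
      pose proof (Rle_abs (B - G a)). lra. }
  set (K' := 1/q - eta).
  assert (Hq0 : 0 < 1/q <= 1).
  { split; [apply Rdiv_lt_0_compat; lra|]. apply (Rmult_le_reg_r q); [lra|].
    replace (1/q*q) with 1 by (field; lra). lra. }
  assert (Heta4' : eta <= (1/q)/4) by (replace ((1/q)/4) with (1/(4*q)) by (field; lra); exact Heta4).
  assert (HK' : 0 < K') by (unfold K'; lra).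
  assert (HK'q : q < 1/K').
  { apply (Rmult_lt_reg_r K'); [exact HK'|]. replace (1/K'*K') with 1 by (field; lra).
    unfold K'. replace (q * (1/q - eta)) with (1 - q * eta) by (field; lra). nra. }
  set (d1 := Rmin (1/2) (1/K' - q)).
  assert (Hd1 : 0 < d1) by (unfold d1; apply Rmin_glb_lt; lra).
  destruct (lim_ev _ _ Hlim d1 Hd1) as [TR HTR].
  destruct (HGbig 1) as [TG1 [HTG1a HTG1]].
  set (T1 := Rmax TG1 (TR + 1)).
  assert (HT1 : TG1 <= T1 /\ TR + 1 <= T1) by (split; [apply Rmax_l|apply Rmax_r]).
  assert (Hbnd : forall x, T1 <= x -> 1 <= G x /\ G x * g2 x <= 2 * g1 x ^ 2 /\ K' * g1 x ^ 2 <= G x * g2 x).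
  { intros x Hx. assert (Hxa : a <= x) by lra. destruct (Hpos x Hxa) as [H1 [H2 H3]].
    assert (HG1 : 1 <= G x) by (apply HTG1; lra).
    specialize (HTR x ltac:(lra)). change (ln (f x)) with (G x) in HTR. apply Rabs_def2 in HTR.
    assert (Hd1a : d1 <= 1/2) by apply Rmin_l. assert (Hd1b : d1 <= 1/K' - q) by apply Rmin_r.
    set (Rx := g1 x ^ 2 / (G x * g2 x)) in *.
    assert (HRx : Rx * (G x * g2 x) = g1 x ^ 2) by (unfold Rx; field; nra).
    assert (HGg : 0 < G x * g2 x) by nra.
    split; [exact HG1|split].
    - assert (1/2 <= Rx) by lra.
      assert ((Rx - 1/2) * (G x * g2 x) >= 0) by (apply Rle_ge, Rmult_le_pos; lra). rewrite <- HRx. lra.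
    - assert (Rx <= 1/K') by lra.
      assert (K' * Rx <= 1) by (apply (Rmult_le_compat_l K') in H; [|lra]; replace (K' * (1/K')) with 1 in H by (field; lra); exact H).
      assert ((1 - K' * Rx) * (G x * g2 x) >= 0) by (apply Rle_ge, Rmult_le_pos; lra). rewrite <- HRx. lra. }
  assert (HT1a : a <= T1) by lra.
  set (M := g1 T1 / (G T1 * G T1)).
  assert (HM : 0 < M).
  { destruct (Hbnd T1 (Rle_refl _)) as [HG1 _]. destruct (Hpos T1 HT1a) as [_ [H2 _]].
    unfold M. apply Rdiv_lt_0_compat; nra. }
  assert (HC : forall x, T1 <= x -> g1 x <= M * (G x * G x)).
  { intros x Hx.
    assert (Hm : - (g1 T1 / (G T1 * G T1)) <= - (g1 x / (G x * G x))).
    { apply (mono (fun x => - (g1 x / (G x * G x)))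
        (fun x => - ((g2 x * (G x * G x) - g1 x * (g1 x * G x + G x * g1 x)) / (G x * G x) ^ 2)) T1);
        [| |lra|exact Hx].
      - intros y Hy. assert (Hya : a <= y) by lra. destruct (Hbnd y Hy) as [HG1 _].
        apply (is_derive_opp (fun x => g1 x / (G x * G x))).
        apply (is_derive_div g1 (fun x => G x * G x)); [apply Hg1; auto| |nra].
        apply D_mult; apply HG; auto.
      - intros y Hy. assert (Hya : a <= y) by lra. destruct (Hbnd y Hy) as [HG1 [Hb2 _]].
        destruct (Hpos y Hya) as [H1 [H2 H3]].
        assert (Hnum : g2 y * (G y * G y) - g1 y * (g1 y * G y + G y * g1 y) <= 0).
        { assert (G y * (G y * g2 y - 2 * g1 y ^ 2) <= 0) by nra. 
          simpl in *. lra. }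
        assert (0 < (G y * G y) ^ 2) by (apply pow_lt; nra).
        assert (Hq' : (g2 y * (G y * G y) - g1 y * (g1 y * G y + G y * g1 y)) / (G y * G y) ^ 2 <= 0).
        { assert (0 < / (G y * G y) ^ 2) by (apply Rinv_0_lt_compat; lra). unfold Rdiv. nra. }
        lra. }
    destruct (Hbnd x Hx) as [HG1 _].
    assert (g1 x / (G x * G x) <= M) by (unfold M; lra).
    apply (Rmult_le_compat_r (G x * G x)) in H; [|nra].
    replace (g1 x / (G x * G x) * (G x * G x)) with (g1 x) in H by (field; lra). lra. }
  set (Df := fun x => F x - f x / g1 x).
  set (E := fun x => f x / (g1 x * G x)).
  assert (HD : forall x, T1 <= x -> Df T1 - K' * E T1 <= Df x - K' * E x).
  { intros x Hx.
    apply (mono (fun x => Df x - K' * E x)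
      (fun x => (f x - (f1 x * g1 x - f x * g2 x) / g1 x ^ 2)
         - K' * ((f1 x * (g1 x * G x) - f x * (g2 x * G x + g1 x * g1 x)) / (g1 x * G x) ^ 2)) T1);
      [| |lra|exact Hx].
    - intros y Hy. assert (Hya : a <= y) by lra. destruct (Hbnd y Hy) as [HG1 _].
      destruct (Hpos y Hya) as [H1 [H2 H3]].
      apply D_minus; [|apply is_derive_scal]; unfold Df, E.
      + apply D_minus; [apply HF; auto|]. apply is_derive_div; [apply Hf; auto|apply Hg1; auto|lra].
      + apply (is_derive_div f (fun x => g1 x * G x)); [apply Hf; auto| |nra].
        apply D_mult; [apply Hg1; auto|apply HG; auto].
    - intros y Hy. assert (Hya : a <= y) by lra. destruct (Hbnd y Hy) as [HG1 [_ Hb3]].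
      destruct (Hpos y Hya) as [H1 [H2 H3]]. rewrite Hf1 by auto.
      set (N := g2 y * G y ^ 2 - K' * g1 y ^ 2 * G y + K' * g2 y * G y + K' * g1 y ^ 2).
      assert (HN : 0 <= N).
      { unfold N. assert (0 <= G y * (G y * g2 y - K' * g1 y ^ 2)) by (apply Rmult_le_pos; lra).
        assert (0 <= K' * (g2 y * G y + g1 y ^ 2)) by (apply Rmult_le_pos; nra). nra. }
      replace (f y - (f y * g1 y * g1 y - f y * g2 y) / g1 y ^ 2 -
        K' * ((f y * g1 y * (g1 y * G y) - f y * (g2 y * G y + g1 y * g1 y)) / (g1 y * G y) ^ 2))
        with (f y / (g1 y ^ 2 * G y ^ 2) * N) by (unfold N; field; lra).
      apply Rmult_le_pos; [|exact HN]. apply Rdiv_le_0_compat; [lra|]. apply Rmult_lt_0_compat; apply pow_lt; lra. }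
  set (c0 := K' * E T1 - Df T1).
  set (B := Rmax 1 (Rmax (256 * M / eta ^ 4) (256 * M * (Rabs c0 / eta + 1)))).
  assert (HB : 1 <= B /\ 256 * M / eta ^ 4 <= B /\ 256 * M * (Rabs c0 / eta + 1) <= B).
  { unfold B. pose proof (Rmax_l 1 (Rmax (256 * M / eta ^ 4) (256 * M * (Rabs c0 / eta + 1)))).
    pose proof (Rmax_r 1 (Rmax (256 * M / eta ^ 4) (256 * M * (Rabs c0 / eta + 1)))).
    pose proof (Rmax_l (256 * M / eta ^ 4) (256 * M * (Rabs c0 / eta + 1))).
    pose proof (Rmax_r (256 * M / eta ^ 4) (256 * M * (Rabs c0 / eta + 1))). lra. }
  destruct (HGbig B) as [T3 [HT3a HT3]].
  exists (Rmax T1 T3). split; [pose proof (Rmax_l T1 T3); lra|].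
  intros t Ht.
  assert (Ht1 : T1 <= t) by (pose proof (Rmax_l T1 T3); lra).
  assert (Ht3 : T3 <= t) by (pose proof (Rmax_r T1 T3); lra).
  assert (Hta : a <= t) by lra.
  destruct (Hpos t Hta) as [Hft [Hg1t Hg2t]].
  destruct (Hbnd t Ht1) as [HG1 [_ _]].
  assert (HGB : B <= G t) by (apply HT3; exact Ht3).
  assert (Hfe : f t = exp (G t)) by (unfold G; rewrite exp_ln; lra).
  assert (HCt := HC t Ht1).
  assert (Hfp : G t ^ 4 / 256 <= f t) by (rewrite Hfe; apply exp_pow4; lra).
  assert (HEt : G t / (256 * M) <= E t).
  { assert (HEe : E t * (g1 t * G t) = f t) by (unfold E; field; lra).
    assert (Hg1G : g1 t * G t <= M * G t ^ 3).
    { simpl. assert (g1 t * G t <= M * (G t * G t) * G t) by (apply Rmult_le_compat_r; lra). lra. }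
    assert (HE0 : 0 < E t) by (unfold E; apply Rdiv_lt_0_compat; nra).
    assert (E t * (g1 t * G t) <= E t * (M * G t ^ 3)) by (apply Rmult_le_compat_l; lra).
    assert (HG3 : 0 < G t ^ 3) by (apply pow_lt; lra).
    assert (G t ^ 4 / 256 <= (E t * M) * G t ^ 3) by lra.
    replace (G t ^ 4 / 256) with ((G t / 256) * G t ^ 3) in H0 by (simpl; field).
    apply Rmult_le_reg_r in H0; [|exact HG3].
    apply (Rmult_le_reg_r M); [exact HM|]. replace (G t / (256 * M) * M) with (G t / 256) by (field; lra). lra. }
  assert (HEbig : Rabs c0 / eta + 1 <= E t).
  { eapply Rle_trans; [|exact HEt]. apply (Rmult_le_reg_r (256 * M)); [lra|].
    replace (G t / (256 * M) * (256 * M)) with (G t) by (field; lra). lra. }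
  assert (HE0 : 0 < E t).
  { assert (0 <= Rabs c0 / eta) by (apply Rdiv_le_0_compat; [apply Rabs_pos|lra]). lra. }
  assert (Hc0 : c0 <= eta * E t).
  { apply (Rmult_le_compat_l eta) in HEbig; [|lra].
    replace (eta * (Rabs c0 / eta + 1)) with (Rabs c0 + eta) in HEbig by (field; lra).
    pose proof (Rle_abs c0). lra. }
  assert (HDt : (K' - eta) * E t <= Df t).
  { specialize (HD t Ht1). unfold c0 in Hc0. lra. }
  assert (HKe : 0 < K' - eta) by (unfold K'; lra).
  assert (HDpos : 0 <= Df t) by nra.
  assert (Hg1exp : g1 t <= exp (eta * G t)).
  { eapply Rle_trans; [exact HCt|]. eapply Rle_trans; [|apply exp_pow4; nra].
    assert (Heta4pos : 0 < eta ^ 4) by (apply pow_lt; lra).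
    assert (HGM : 256 * M <= eta ^ 4 * G t).
    { assert (256 * M / eta ^ 4 <= G t) by lra.
      apply (Rmult_le_compat_l (eta ^ 4)) in H; [|lra].
      replace (eta ^ 4 * (256 * M / eta ^ 4)) with (256 * M) in H by (field; lra). exact H. }
    replace ((eta * G t) ^ 4 / 256) with ((eta ^ 4 * G t) * G t ^ 3 / 256) by (simpl; field).
    assert (HG3 : G t <= G t ^ 3) by (simpl; nra).
    assert (256 * M * G t <= eta ^ 4 * G t * G t ^ 3) by (apply Rmult_le_compat; nra).
    simpl in *. nra. }
  assert (HFdef : F t = Df t + f t / g1 t) by (unfold Df; ring).
  assert (Hfg : exp ((1 - eta) * G t) <= f t / g1 t).
  { rewrite Hfe. replace ((1 - eta) * G t) with (G t - eta * G t) by ring.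
    unfold Rminus. rewrite exp_plus, exp_Ropp.
    unfold Rdiv. apply Rmult_le_compat_l; [left; apply exp_pos|].
    apply Rinv_le_contravar; [exact Hg1t|exact Hg1exp]. }
  assert (HFpos : 0 < F t) by (pose proof (exp_pos ((1 - eta) * G t)); lra).
  assert (HlnF : (1 - eta) * G t <= ln (F t)).
  { rewrite <- (ln_exp ((1 - eta) * G t)). apply ln_le; [apply exp_pos|lra]. }
  exists (((f t * ln (F t) + F t * (f t / F t)) * f t - F t * ln (F t) * f1 t) / f t ^ 2).
  split.
  - apply (is_derive_div (fun t => F t * ln (F t)) f t); [|apply Hf; auto|lra].
    apply (D_mult F (fun t => ln (F t))); [apply HF; auto|]. apply D_ln; [apply HF; auto|exact HFpos].
  - set (Y := Df t * g1 t / f t).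
    assert (Hform : ((f t * ln (F t) + F t * (f t / F t)) * f t - F t * ln (F t) * f1 t) / f t ^ 2
                    = 1 - ln (F t) * Y).
    { unfold Y, Df. rewrite Hf1 by auto. field. repeat split; lra. }
    rewrite Hform.
    assert (HY : (K' - eta) / G t <= Y).
    { unfold Y. apply (Rmult_le_compat_r (g1 t / f t)) in HDt; [|apply Rdiv_le_0_compat; lra].
      unfold E in HDt. replace ((K' - eta) * (f t / (g1 t * G t)) * (g1 t / f t)) with ((K' - eta) / G t) in HDt
        by (field; repeat split; lra).
      replace (Df t * g1 t / f t) with (Df t * (g1 t / f t)) by (field; lra). exact HDt. }
    assert (HY0 : 0 <= (K' - eta) / G t) by (apply Rdiv_le_0_compat; lra).
    assert (Hprod : (1 - eta) * G t * ((K' - eta) / G t) <= ln (F t) * Y).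
    { apply Rmult_le_compat; try lra. apply Rmult_le_pos; lra. }
    replace ((1 - eta) * G t * ((K' - eta) / G t)) with ((1 - eta) * (K' - eta)) in Hprod by (field; lra).
    unfold K' in *. nra.
Qed.

Lemma Gbig (G g1 g2 : R -> R) a :
  (forall x, a <= x -> is_derive G x (g1 x)) ->
  (forall x, a <= x -> is_derive g1 x (g2 x)) ->
  (forall x, a <= x -> 0 < g1 x /\ 0 < g2 x) ->
  forall B, exists T, a <= T /\ forall x, T <= x -> B <= G x.
Proof.
  intros HG Hg1 Hpos.
  assert (Hg1m : forall x y, a <= x -> x <= y -> g1 x <= g1 y).
  { apply (mono g1 g2 a Hg1). intros x Hx; destruct (Hpos x Hx) as [_ H]; lra. }
  assert (HA : forall x, a <= x -> G a + g1 a * (x - a) <= G x).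
  { intros x Hx.
    assert (H := mono (fun x => G x - g1 a * x) (fun x => g1 x - g1 a * 1) a).
    assert (H' : G a - g1 a * a <= G x - g1 a * x); [|lra].
    apply H; [| |lra|exact Hx].
    - intros y Hy. apply D_minus; [apply HG; auto|]. apply is_derive_scal. apply D_id.
    - intros y Hy. specialize (Hg1m a y (Rle_refl _) Hy). lra. }
  intros B. destruct (Hpos a (Rle_refl _)) as [Hg1a _].
  exists (a + Rabs (B - G a) / g1 a). split.
  - assert (0 <= Rabs (B - G a) / g1 a) by (apply Rdiv_le_0_compat; [apply Rabs_pos|lra]). lra.
  - intros x Hx. assert (Hxa : a <= x).
    { assert (0 <= Rabs (B - G a) / g1 a) by (apply Rdiv_le_0_compat; [apply Rabs_pos|lra]). lra. }
    specialize (HA x Hxa).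
    assert (g1 a * (Rabs (B - G a) / g1 a) <= g1 a * (x - a)) by (apply Rmult_le_compat_l; lra).
    replace (g1 a * (Rabs (B - G a) / g1 a)) with (Rabs (B - G a)) in H by (field; lra).
    pose proof (Rle_abs (B - G a)). lra.
Qed.

Theorem lemma2p12 (f f1 : R -> R) (t0 : R) (g1 g2 : R -> R) (q : R) (p : Rbar) :
  0 <= t0 ->
  (forall t, 0 <= t -> 0 <= f t) ->
  (forall t, 0 <= t -> deriv_within (fun s => 0 <= s) f f1 t) ->
  (forall t, 0 <= t -> cont_within (fun s => 0 <= s) f1 t) ->
  (forall t, t0 <= t -> 0 < f t) ->
  (exists f2 : R -> R,
     (forall t, t0 <= t -> deriv_within (fun s => t0 <= s) f1 f2 t) /\
     (forall t, t0 <= t -> cont_within (fun s => t0 <= s) f2 t)) ->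
  (forall t, t0 <= t -> deriv_within (fun s => t0 <= s) (fun s => ln (f s)) g1 t) ->
  (forall t, t0 <= t -> deriv_within (fun s => t0 <= s) g1 g2 t) ->
  (forall t, t0 <= t -> 0 < g1 t /\ 0 < g2 t) ->
  ((q = 1 /\ Rbar_lt (Finite 0) p) \/ (1 < q /\ exists r, p = Finite r /\ 0 < r)) ->
  is_lim (fun t => (g1 t) ^ 2 / (ln (f t) * g2 t)) p_infty (Finite q) ->
  is_lim (fun t => t * g1 t / ln (f t)) p_infty p ->
  (q = 1 ->
     (forall s t, t0 <= s -> s <= t -> s * g1 s / ln (f s) <= t * g1 t / ln (f t)) /\
     exists (k : nat) (gh gh1 gh2 : R -> R),
       (1 <= k)%nat /\
       (forall t, t0 <= t -> deriv_within (fun s => t0 <= s) gh gh1 t) /\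
       (forall t, t0 <= t -> deriv_within (fun s => t0 <= s) gh1 gh2 t) /\
       (forall t, t0 <= t -> cont_within (fun s => t0 <= s) gh2 t) /\
       (forall t, t0 <= t -> f t = exp_iter k (gh t)) /\
       (forall s t, t0 <= s -> s <= t -> gh1 t / gh t <= gh1 s / gh s)) ->
  let F := fun t => RInt f 0 t in
  let h := fun t => F t * ln (F t) / f t in
  (exists T, forall t, T <= t -> exists d, derivable_pt_lim h t d) /\
  (forall eps, 0 < eps -> exists T, forall t d, T <= t ->
       derivable_pt_lim h t d -> d <= recip_ext p + eps).
Proof.
  intros Ht0 _ Hfd _ Hfpos _ HGd Hg1d Hg12 Hcase Hlq Hlp _ F h.
  set (a := t0 + 1).
  assert (Ha : 0 < a) by (unfold a; lra).
  assert (Hf : forall x, a <= x -> is_derive f x (f1 x)).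
  { intros x Hx. apply (deriv_within_is_derive 0); [unfold a in *; lra|]. apply Hfd. unfold a in *; lra. }
  assert (Hg1 : forall x, a <= x -> is_derive g1 x (g2 x)).
  { intros x Hx. apply (deriv_within_is_derive t0); [unfold a in *; lra|]. apply Hg1d. unfold a in *; lra. }
  assert (HG : forall x, a <= x -> is_derive (fun s => ln (f s)) x (g1 x)).
  { intros x Hx. apply (deriv_within_is_derive t0); [unfold a in *; lra|]. apply HGd. unfold a in *; lra. }
  assert (HF : forall x, a <= x -> is_derive F x (f x)).
  { intros x Hx. apply (F_deriv f f1 Hfd). unfold a in *; lra. }
  assert (Hpos : forall x, a <= x -> 0 < f x /\ 0 < g1 x /\ 0 < g2 x).
  { intros x Hx. split; [apply Hfpos; unfold a in *; lra|apply Hg12; unfold a in *; lra]. }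
  assert (Hf1 : forall x, a <= x -> f1 x = f x * g1 x).
  { intros x Hx. destruct (Hpos x Hx) as [H1 _].
    assert (H2 := D_ln f x (f1 x) (Hf x Hx) H1).
    apply is_derive_unique in H2. rewrite (is_derive_unique _ _ _ (HG x Hx)) in H2.
    rewrite H2. field. lra. }
  assert (Hq : 1 <= q) by (destruct Hcase as [[-> _]|[H _]]; lra).
  assert (Hcore := core f f1 g1 g2 F a q Ha Hq Hf Hg1 HF Hpos Hf1 Hlq).
  assert (H4q : 0 < 1 / (4 * q)) by (apply Rdiv_lt_0_compat; lra).
  assert (Hrec : 1 - 1/q <= recip_ext p).
  { destruct Hcase as [[Hq1 Hp]|[Hq1 [r [-> Hr]]]].
    - subst q. replace (1 - 1/1) with 0 by field.
      destruct p as [r| |]; simpl in *; [left; apply Rinv_0_lt_compat; lra|lra|contradiction].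
    - simpl. destruct (Gbig (fun s => ln (f s)) g1 g2 a HG Hg1 (fun x Hx => proj2 (Hpos x Hx)) 1)
        as [T [HTa HT]].
      assert (H := stepH (fun s => ln (f s)) g1 g2 T q r ltac:(lra) Hq1 Hr
        (fun x Hx => HG x ltac:(lra)) (fun x Hx => Hg1 x ltac:(lra))
        (fun x Hx => conj (Rlt_le_trans _ _ _ Rlt_0_1 (HT x Hx)) (proj2 (Hpos x ltac:(lra)))) Hlq Hlp).
      replace (/ r) with (1 / r) by (unfold Rdiv; ring). exact H. }
  split.
  - destruct (Hcore (1 / (4 * q)) H4q (Rle_refl _)) as [T [_ HT]].
    exists T. intros t Ht. destruct (HT t Ht) as [d [Hd _]]. exists d. apply is_derive_Reals. exact Hd.
  - intros eps Heps.
    set (eta := Rmin (eps / 3) (1 / (4 * q))).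
    assert (Heta : 0 < eta) by (unfold eta; apply Rmin_glb_lt; lra).
    assert (Heta1 : eta <= eps / 3) by apply Rmin_l.
    assert (Heta2 : eta <= 1 / (4 * q)) by apply Rmin_r.
    destruct (Hcore eta Heta Heta2) as [T [_ HT]].
    exists T. intros t d Ht Hd. destruct (HT t Ht) as [d' [Hd' Hb]].
    apply is_derive_Reals in Hd'. rewrite (uniqueness_limite _ _ _ _ Hd Hd'). lra.
Qed.
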